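(* Let $m$ be an integer with $m\ge 1$ or $m\le -2$, let $T_j(z,w)=w^jS_j(z/w)$, let \[F=\left[(xyw-u^2z)w^{2m}+(xyzw+4u^2w^2-x^2w^2-y^2w^2-u^2z^2)T_mT_{m-1}\right]T_{m-1}-u^2w^{2m}T_m,\] let $S=\{F=0\}\subset\mathbb P^2(x:y:u)\times\mathbb P^1(z:w)$ and $\phi:S\to\mathbb P^1$, $(x:y:u,z:w)\mapsto(z:w)$. The degenerate fibers of $\phi$ (those over points $(z:w)$ for which $F=F_x=F_y=F_u=0$ has a solution $(x:y:u)\in\mathbb P^2$) are exactly: $\phi^{-1}(1:0)=\{(x:y:u)\mid u^2=0\}$; $\phi^{-1}(z:1)=\{(x:y:u)\mid u^2=0\}$ where $z$ is a root of $S_{m-1}(z)$; $\phi^{-1}(z:1)=\{(x:y:u)\mid (xS_m(z)-yS_{m-1}(z))(yS_m(z)-xS_{m-1}(z))=0\}$ where $z$ is a root of $S_{3m}(z)$; $\phi^{-1}(z:1)=\{(x:y:u)\mid (x-y)^2-(2-z)u^2=0\}$ where $z$ is a root of $S_m(z)-S_{m-1}(z)$; $\phi^{-1}(z:1)=\{(x:y:u)\mid (x+y)^2-(2+z)u^2=0\}$ where $z$ is a root of $S_m(z)+S_{m-1}(z)$.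
   Context: The Chebyshev polynomials $S_j(\omega)$ are defined for all integers $j$ by $S_0=1$, $S_1=\omega$, $S_{j+1}=\omega S_j-S_{j-1}$. $S$ is the projective closure of the natural model of the canonical component of the $\mathrm{SL}_2(\mathbb C)$ character variety of the double twist link $J(3,2m+1)$; each fiber of $\phi$ is a conic in $\mathbb P^2(x:y:u)$. *)

(* Defs.v *)
From mathcomp Require Import all_boot all_algebra.
From mathcomp Require Import Rstruct complex.
From mathcomp Require Import mpoly ring zify.
Set Implicit Arguments.
Unset Strict Implicit.
Unset Printing Implicit Defensive.
Import GRing.Theory Num.Theory.
Local Open Scope ring_scope.

Definition C : numClosedFieldType := (Rdefinitions.R)[i]%C.

Section Cheb.
Variable R : fieldType.

(** Chebyshev polynomials S_j, j : int, defined by S_0 = 1, S_1 = z,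
    S_(j+1) = z S_j - S_(j-1) (for all integers j).  On nonnegative indices
    we compute them by the forward recurrence; the backward recurrence forces
    S_(-1) = 0 and S_(-k-2) = - S_k. *)
Fixpoint Spair (z : R) (n : nat) : R * R :=
  match n with
  | 0 => (1, z)
  | n'.+1 => let p := Spair z n' in (p.2, z * p.2 - p.1)
  end.
Definition Snat (z : R) (n : nat) : R := (Spair z n).1.

Definition cheb (j : int) (z : R) : R :=
  match j with
  | Posz n => Snat z n
  | Negz 0 => 0
  | Negz k.+1 => - Snat z k
  end.

(** T_j(z,w) = w^j S_j(z/w), exactly as in the paper (integer power of w;
    meaningful for w <> 0). *)
Definition Tj (j : int) (z w : R) : R := w ^ j * cheb j (z / w).

(** Homogeneous (polynomial) version, for nonnegative degree n:
    Th_0 = 1, Th_1 = z, Th_(n+2) = z Th_(n+1) - w^2 Th_n;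
    it equals w^n S_n(z/w) when w <> 0 (lemma Th_Tj) and makes sense at w = 0. *)
Fixpoint Tpair (z w : R) (n : nat) : R * R :=
  match n with
  | 0 => (1, z)
  | n'.+1 => let p := Tpair z w n' in (p.2, z * p.2 - w ^+ 2 * p.1)
  end.
Definition Th (z w : R) (n : nat) : R := (Tpair z w n).1.

Definition mx : {mpoly R[3]} := 'X_0.
Definition my : {mpoly R[3]} := 'X_1.
Definition mu : {mpoly R[3]} := 'X_2.
Definition cst (a : R) : {mpoly R[3]} := a%:MP.

Definition Qform (z w : R) : {mpoly R[3]} :=
  mx * my * cst (z * w) + 4 * mu ^+ 2 * cst (w ^+ 2) - mx ^+ 2 * cst (w ^+ 2)
  - my ^+ 2 * cst (w ^+ 2) - mu ^+ 2 * cst (z ^+ 2).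

Definition Fpaper (m : int) (z w : R) : {mpoly R[3]} :=
  ((mx * my * cst w - mu ^+ 2 * cst z) * cst (w ^ (2 * m))
    + Qform z w * cst (Tj m z w * Tj (m - 1) z w)) * cst (Tj (m - 1) z w)
  - mu ^+ 2 * cst (w ^ (2 * m) * Tj m z w).

(** The bihomogeneous polynomial defining S (valid at every (z:w), including
    w = 0).  For m >= 1 it is F itself (all T_j polynomial); for m = -n <= -2
    the T_j with negative index are Laurent in w, and the polynomial is
    w^(6n-2) F (no further power of w divides it), expanded using
    T_(-k) = - w^(2-2k) Th_(k-2). *)
Definition Fpol (m : int) (z w : R) : {mpoly R[3]} :=
  match m with
  | Posz k =>
      ((mx * my * cst w - mu ^+ 2 * cst z) * cst (w ^+ (2 * k))
        + Qform z w * cst (Th z w k * Th z w k.-1)) * cst (Th z w k.-1)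
      - mu ^+ 2 * cst (w ^+ (2 * k) * Th z w k)
  | Negz k => (* m = -(k+1) *)
      - (mx * my * cst w - mu ^+ 2 * cst z) * cst (w ^+ (2 * k) * Th z w k)
      - Qform z w * cst (Th z w k.-1 * Th z w k ^+ 2)
      + mu ^+ 2 * cst (w ^+ (2 * k.+1) * Th z w k.-1)
  end.

Definition clr (m : int) : nat :=
  match m with Posz _ => 0 | Negz k => 6 * k + 4 end.

Definition pt3 (x y u : R) : 'I_3 -> R := fun i => nth 0 [:: x; y; u] i.

Definition degenerate (P : {mpoly R[3]}) : Prop :=
  exists x y u : R, (x, y, u) != (0, 0, 0) /\
    P.@[pt3 x y u] = 0 /\ (forall i : 'I_3, (P^`M(i)).@[pt3 x y u] = 0).


Lemma SnatSS (z : R) n : Snat z n.+2 = z * Snat z n.+1 - Snat z n.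
Proof. by rewrite /Snat /=. Qed.
Lemma cheb0 (z : R) : cheb 0 z = 1. Proof. by []. Qed.
Lemma cheb1 (z : R) : cheb 1 z = z. Proof. by []. Qed.
Lemma cheb_rec (z : R) (j : int) : cheb (j + 1) z = z * cheb j z - cheb (j - 1) z.
Proof.
case: j => [[|[|n]]|[|[|k]]].
- by rewrite /cheb /Snat /=; ring.
- by rewrite /cheb /Snat /=; ring.
- have -> : (Posz n.+2 + 1 = Posz n.+3)%R by lia.
  have -> : (Posz n.+2 - 1 = Posz n.+1)%R by lia.
  by rewrite /cheb SnatSS.
- have -> : (Negz 0 + 1 = 0)%R by lia.
  have -> : (Negz 0 - 1 = Negz 1)%R by lia.
  by rewrite /cheb /Snat /=; ring.
- have -> : (Negz 1 + 1 = Negz 0)%R by lia.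
  have -> : (Negz 1 - 1 = Negz 2)%R by lia.
  by rewrite /cheb /Snat /=; ring.
- have -> : (Negz k.+2 + 1 = Negz k.+1)%R by lia.
  have -> : (Negz k.+2 - 1 = Negz k.+3)%R by lia.
  by rewrite /cheb SnatSS; ring.
Qed.


Lemma Tpair_Spair (z w : R) n : w != 0 ->
  Tpair z w n = (w ^+ n * (Spair (z / w) n).1, w ^+ n.+1 * (Spair (z / w) n).2).
Proof.
move=> wn0; elim: n => [|n IH] /=.
  by congr (_, _); rewrite ?expr0 ?expr1 ?mul1r //; field.
by rewrite IH /=; congr (_, _); rewrite !exprS; field.
Qed.

Lemma Th_Snat (z w : R) n : w != 0 -> Th z w n = w ^+ n * Snat (z / w) n.
Proof. by move=> wn0; rewrite /Th Tpair_Spair. Qed.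

Lemma Snat_Th (z w : R) n : w != 0 -> Snat (z / w) n = Th z w n / w ^+ n.
Proof. by move=> wn0; rewrite Th_Snat //; field; rewrite expf_neq0. Qed.

Lemma Tj_Posz (z w : R) n : w != 0 -> Tj (Posz n) z w = Th z w n.
Proof. by move=> wn0; rewrite Th_Snat. Qed.

Lemma Tj_NegzS (z w : R) k : w != 0 ->
  Tj (Negz k.+1) z w = - Th z w k / (w ^+ k.+2 * w ^+ k).
Proof.
move=> wn0; rewrite /Tj /= Snat_Th //.
have h1 : w ^+ k != 0 by rewrite expf_neq0.
have h2 : w ^+ k.+2 != 0 by rewrite expf_neq0.
have -> : w ^ Negz k.+1 = (w ^+ k.+2)^-1 by []. by field; rewrite h1 h2.
Qed.

Lemma pw_split (w : R) k a b n : n = (a * k + b)%N ->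
  w ^+ n = (w ^+ k) ^+ a * w ^+ b.
Proof. by move=> ->; rewrite -exprM -exprD mulnC. Qed.

Lemma Fpaper_nf (m : int) (z w : R) :
  let Tm := Tj m z w in let Tm1 := Tj (m - 1) z w in let p := w ^ (2 * m) in
  Fpaper m z w =
    mx * my * cst ((w * p + z * w * Tm * Tm1) * Tm1)
  + (mx ^+ 2 + my ^+ 2) * cst (- w ^+ 2 * Tm * Tm1 * Tm1)
  + mu ^+ 2 * cst ((- z * p + (4 * w ^+ 2 - z ^+ 2) * Tm * Tm1) * Tm1 - p * Tm).
Proof. rewrite /Fpaper /Qform /cst /mx /my /mu /=; ring. Qed.

Lemma nf_scale (e A B Cc : R) :
  cst e * (mx * my * cst A + (mx ^+ 2 + my ^+ 2) * cst B + mu ^+ 2 * cst Cc) =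
  mx * my * cst (e * A) + (mx ^+ 2 + my ^+ 2) * cst (e * B) + mu ^+ 2 * cst (e * Cc).
Proof. rewrite /cst; ring. Qed.

Lemma Fpol_Fpaper (m : int) (z w : R) : (1 <= m \/ m <= -2) -> w != 0 ->
  Fpol m z w = cst (w ^+ clr m) * Fpaper m z w.
Proof.
move=> hm wn0; case: m hm => [k|k] hm.
- case: k hm => [|k] hm; first by case: hm; lia.
  have e1 : (Posz k.+1 - 1 = Posz k)%R by lia.
  have e2 : (2 * Posz k.+1 = Posz (2 * k.+1))%R by lia.
  rewrite /Fpaper e1 e2 !Tj_Posz // /Fpol /clr /=.
  rewrite /cst /Qform; ring.
- case: k hm => [|k] hm; first by case: hm; lia.
  have e1 : (Negz k.+1 - 1 = Negz k.+2)%R by lia.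
  have e2 : (2 * Negz k.+1 = Negz (2 * k + 3))%R by lia.
  rewrite Fpaper_nf e1 e2 !Tj_NegzS // /Fpol /clr /=.
  set W := w ^+ k.
  have hW : W != 0 by rewrite expf_neq0.
  have -> : w ^ Negz (2 * k + 3) = (w ^+ (2 * k + 3).+1)^-1 by [].
  rewrite (@pw_split w k 2 4 ((2 * k + 3).+1)); last by lia.
  rewrite (@pw_split w k 1 2 (k.+2)); last by lia.
  rewrite (@pw_split w k 1 3 (k.+3)); last by lia.
  rewrite (@pw_split w k 2 2 ((2 * k.+1))); last by lia.
  rewrite (@pw_split w k 2 4 ((2 * k.+2))); last by lia.
  rewrite (@pw_split w k 6 10 ((6 * k.+1 + 4))); last by lia.
  rewrite (@pw_split w k 1 1 (k.+1)); last by lia.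
  rewrite -/W.
  set a := Th z w k; set b := Th z w k.+1.
  have -> : - (mx * my * cst w - mu ^+ 2 * cst z) * cst (W ^+ 2 * w ^+ 2 * b)
      - Qform z w * cst (a * b ^+ 2) + mu ^+ 2 * cst (W ^+ 2 * w ^+ 4 * a) =
    mx * my * cst (- W ^+ 2 * w ^+ 3 * b - z * w * a * b ^+ 2)
  + (mx ^+ 2 + my ^+ 2) * cst (w ^+ 2 * a * b ^+ 2)
  + mu ^+ 2 * cst (z * W ^+ 2 * w ^+ 2 * b - (4 * w ^+ 2 - z ^+ 2) * a * b ^+ 2
                   + W ^+ 2 * w ^+ 4 * a).
    by rewrite /Qform /cst /mx /my /mu; ring.
  rewrite nf_scale; congr (_ * cst _ + _ * cst _ + _ * cst _).
  all: by field; rewrite ?hW ?wn0.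
Qed.
End Cheb.
Arguments mx {R}.
Arguments my {R}.
Arguments mu {R}.

(* Main.v *)
Require Import Defs.
From mathcomp Require Import all_boot all_algebra.
From mathcomp Require Import Rstruct complex mpoly ring zify.
Import GRing.Theory Num.Theory.
Local Open Scope ring_scope.

Definition nf {R : fieldType} (A B Cc : R) : {mpoly R[3]} :=
  mx * my * cst A + (mx ^+ 2 + my ^+ 2) * cst B + mu ^+ 2 * cst Cc.

Lemma mderivXU (R : fieldType) (i j : 'I_3) : ('X_j : {mpoly R[3]})^`M(i) = (j == i)%:R%:MP.
Proof.
rewrite mderivX mnm1E.
case: eqP => [->|_]; last by rewrite scale0r.
have -> : (U_(i) - U_(i))%MM = 0%MM by apply/mnmP=> k; rewrite !mnmE subnn.
by rewrite mpolyX0 scale1r.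
Qed.

Lemma nf_eval (R : fieldType) (A B Cc x y u : R) : (nf A B Cc).@[pt3 x y u] = x * y * A + (x ^+ 2 + y ^+ 2) * B + u ^+ 2 * Cc.
Proof. by rewrite /nf /mx /my /mu /cst !(mevalD, mevalM, mevalC, mevalXU) /pt3 /= !expr2. Qed.

Lemma nf_deriv (R : fieldType) (A B Cc x y u : R) (i : 'I_3) : ((nf A B Cc)^`M(i)).@[pt3 x y u] =
  if i == 0 :> nat then y * A + 2 * x * B else if i == 1 :> nat then x * A + 2 * y * B else 2 * u * Cc.
Proof.
rewrite /nf /mx /my /mu /cst !(mderivD, mderivM, mderivC, expr2, mderivXU).
rewrite !(mevalD, mevalM, mevalC, mevalXU).
case: i => [[|[|[|k]]] hk] //=; rewrite /pt3 /=; ring.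
Qed.

Lemma two_neq0 : (2 : C) != 0.
Proof. by rewrite pnatr_eq0. Qed.

Lemma degenerate_nf (A B Cc : C) :
  degenerate (nf A B Cc) <-> [\/ Cc = 0, 2 * B - A = 0 | 2 * B + A = 0].
Proof.
split.
- move=> [x [y [u [nz [_ hd]]]]].
  have hx := hd (@Ordinal 3 0 isT); have hy := hd (@Ordinal 3 1 isT);
    have hu := hd (@Ordinal 3 2 isT).
  rewrite !nf_deriv /= in hx hy hu.
  have [c0|c0] := eqVneq Cc 0; first by constructor 1.
  have u0 : u = 0.
    by move: hu => /eqP; rewrite !mulf_eq0 (negbTE two_neq0) (negbTE c0) orbF /= => /eqP.
  have [d0|d0] := eqVneq ((2 * B - A) * (2 * B + A)) 0.
    by move: d0 => /eqP; rewrite mulf_eq0 => /orP [] /eqP h; [constructor 2|constructor 3].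
  exfalso; move: nz; rewrite u0.
  have ex : (2 * B - A) * (2 * B + A) * x = 0.
    have -> : (2 * B - A) * (2 * B + A) * x = 2 * B * (y * A + 2 * x * B) - A * (x * A + 2 * y * B) by ring.
    by rewrite hx hy; ring.
  have ey : (2 * B - A) * (2 * B + A) * y = 0.
    have -> : (2 * B - A) * (2 * B + A) * y = 2 * B * (x * A + 2 * y * B) - A * (y * A + 2 * x * B) by ring.
    by rewrite hx hy; ring.
  move: ex ey => /eqP; rewrite mulf_eq0 (negbTE d0) /= => /eqP ->.
  by move=> /eqP; rewrite mulf_eq0 (negbTE d0) /= => /eqP ->; rewrite eqxx.
- case=> h.
  + exists 0, 0, 1; split.
      by apply/eqP => -[] /eqP; rewrite oner_eq0.
    split; first by rewrite nf_eval h; ring.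
    by move=> i; rewrite nf_deriv h; case: ifP => _; [|case: ifP => _]; ring.
  + exists 1, (-1), 0; split.
      by apply/eqP => -[] /eqP; rewrite oner_eq0.
    have hA : A = 2 * B by apply/eqP; rewrite eq_sym -subr_eq0 h.
    split; first by rewrite nf_eval hA; ring.
    by move=> i; rewrite nf_deriv hA; case: ifP => _; [|case: ifP => _]; ring.
  + exists 1, 1, 0; split.
      by apply/eqP => -[] /eqP; rewrite oner_eq0.
    have hA : A = - (2 * B) by apply/eqP; rewrite -addr_eq0 addrC h.
    split; first by rewrite nf_eval hA; ring.
    by move=> i; rewrite nf_deriv hA; case: ifP => _; [|case: ifP => _]; ring.
Qed.
Section F.
Variable R : fieldType.

Lemma Tj1 j (z : R) : Tj j z 1 = cheb j z.
Proof. by rewrite /Tj exp1rz mul1r divr1. Qed.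

Lemma Fpol_z1 (m : int) (z : R) : (1 <= m \/ m <= -2) ->
  let s := cheb m z in let t := cheb (m - 1) z in
  Fpol m z 1 = nf ((1 + z * s * t) * t) (- s * t * t)
                  ((- z + (4 - z ^+ 2) * s * t) * t - s).
Proof.
move=> hm s t; rewrite Fpol_Fpaper ?oner_neq0 // Fpaper_nf !Tj1 exp1rz expr1n.
rewrite /nf -/s -/t /cst mpolyC1 mul1r.
congr (_ * (_ %:MP) + _ * (_ %:MP) + _ * (_ %:MP)); ring.
Qed.

Lemma Tpair10 n : Tpair (1 : R) 0 n = (1, 1).
Proof. by elim: n => [|n IH] //=; rewrite IH /= expr0n /=; congr (_, _); ring. Qed.

Lemma Fpol_10 (m : int) : (1 <= m \/ m <= -2) ->
  exists c : R, c != 0 /\ Fpol m 1 0 = nf 0 0 c.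
Proof.
case: m => k hm.
- case: k hm => [|k] hm; first by case: hm; lia.
  exists (-1); split; first by rewrite oppr_eq0 oner_neq0.
  rewrite /Fpol /Th !Tpair10 /= expr0n /= /nf /Qform /cst expr0n /=.
  rewrite !(mul0r, mulr0, mul1r, mulr1, subr0, add0r, addr0, sub0r, expr1n).
  rewrite -!mpolyCN. ring.
- case: k hm => [|k] hm; first by case: hm; lia.
  exists 1; split; first by rewrite oner_neq0.
  rewrite /Fpol /Th !Tpair10 /= /nf /Qform /cst !expr0n /=.
  rewrite !(mul0r, mulr0, mul1r, mulr1, subr0, add0r, addr0, sub0r, expr1n).
  ring.
Qed.
End F.
Section Ch.
Variable R : fieldType.
Variable z : R.

Lemma rec0 (f : int -> R) : f 0 = 0 -> f 1 = 0 ->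
  (forall b, f (b + 1) = z * f b - f (b - 1)) -> forall b, f b = 0.
Proof.
move=> f0 f1 fr.
have pos : forall n : nat, f (n%:Z) = 0 /\ f (n%:Z + 1) = 0.
  elim=> [|n [IH1 IH2]]; first by split.
  split; first by have -> : (Posz n.+1 = n%:Z + 1)%R by lia.
  have -> : (Posz n.+1 + 1 = (n%:Z + 1) + 1)%R by lia.
  rewrite fr IH2.
  have -> : (n%:Z + 1 - 1 = n%:Z)%R by lia.
  by rewrite IH1; ring.
have neg : forall n : nat, f (- (n : int)) = 0 /\ f (- (n : int) + 1) = 0.
  elim=> [|n [IH1 IH2]]; first by split.
  have e : (- (Posz n.+1) = - (n : int) - 1)%R by lia.
  have h : f (- (n : int) - 1) = 0.
    have := fr (- (n : int)); rewrite IH1 IH2 mulr0 sub0r => /eqP.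
    by rewrite eq_sym oppr_eq0 => /eqP.
  split; first by rewrite e.
  by rewrite e; have -> : (- (n : int) - 1 + 1 = - (n : int))%R by lia.
case=> n; first by case: (pos n).
have -> : Negz n = - (Posz n.+1) by [].
by case: (neg n.+1).
Qed.

Notation S j := (cheb j z).

Lemma cheb_add a b : S (a + b) = S a * S b - S (a - 1) * S (b - 1).
Proof.
suff H : forall b, (fun b => S (a + b) - (S a * S b - S (a - 1) * S (b - 1))) b = 0.
  by apply/eqP; rewrite -subr_eq0 H.
apply: rec0 => /=.
- rewrite addr0 /Snat /=; ring.
- rewrite cheb_rec /Snat /=; ring.
- clear b => b.
  have h := cheb_rec z (b - 1).
  rewrite (_ : b - 1 + 1 = b) in h; last by ring.
  have h2 : S (b - 1 - 1) = z * S (b - 1) - S b by rewrite h; ring.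
  rewrite h2 (_ : a + (b + 1) = (a + b) + 1); last by ring.
  rewrite (_ : a + (b - 1) = (a + b) - 1); last by ring.
  rewrite (_ : b + 1 - 1 = b); last by ring.
  rewrite (cheb_rec z (a + b)) (cheb_rec z b); ring.
Qed.

Lemma cheb_m2 m : S (m - 2) = z * S (m - 1) - S m.
Proof.
have h := cheb_rec z (m - 1).
rewrite (_ : m - 1 + 1 = m) in h; last by ring.
rewrite (_ : m - 1 - 1 = m - 2) in h; last by ring.
rewrite h; ring.
Qed.

Lemma cheb_refl j : S (- j) = - S (j - 2).
Proof.
suff H : forall b, (fun b => S (- b) + S (b - 2)) b = 0.
  by apply/eqP; rewrite -subr_eq0 opprK H.
apply: rec0 => /=.
- by rewrite /Snat /=; ring.
- by rewrite /Snat /=; ring.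
- move=> b.
  have e1 : - (b + 1) = - b - 1 by ring.
  have e2 : - (b - 1) = - b + 1 by ring.
  have e3 : b + 1 - 2 = b - 1 by ring.
  have e4 : b - 1 - 2 = b - 2 - 1 by ring.
  have h1 := cheb_rec z (- b).
  have h2 := cheb_rec z (b - 2).
  rewrite (_ : b - 2 + 1 = b - 1) in h2; last by ring.
  rewrite e1 e2 e3 e4 h1 h2; ring.
Qed.

Lemma cassini m : S m ^+ 2 - z * S m * S (m - 1) + S (m - 1) ^+ 2 = 1.
Proof.
have h := cheb_add m (- m).
rewrite subrr (_ : - m - 1 = - (m + 1)) ?cheb_refl in h; last by ring.
rewrite (_ : m + 1 - 2 = m - 1) in h; last by ring.
rewrite cheb_m2 /= /Snat /= in h.
rewrite h; ring.
Qed.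

Lemma cheb3 m : S (3 * m) = S m ^+ 3 - 3 * S m * S (m - 1) ^+ 2 + z * S (m - 1) ^+ 3.
Proof.
have -> : 3 * m = (m + m) + m by ring.
rewrite (cheb_add (m + m) m) (_ : m + m - 1 = m + (m - 1)); last by ring.
rewrite (cheb_add m m) (cheb_add m (m - 1)) (_ : m - 1 - 1 = m - 2); last by ring.
rewrite cheb_m2; ring.
Qed.
End Ch.

Lemma iff_mul (k a : C) : k != 0 -> (k * a = 0 <-> a = 0).
Proof.
move=> k0; split; last by move=> ->; rewrite mulr0.
by move/eqP; rewrite mulf_eq0 (negbTE k0) /= => /eqP.
Qed.

Lemma eq0P (a b : C) : a - b = 0 <-> a = b.
Proof. by split => [/eqP|->]; [rewrite subr_eq0 => /eqP|rewrite subrr]. Qed.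

Theorem proposition7p7 (m : int) (hm : (1 <= m) \/ (m <= -2)) :
  let F := Fpol (R := C) m in
  let S := fun (j : int) (z : C) => cheb j z in
  (degenerate (F 1 0) /\
     forall x y u : C, (F 1 0).@[pt3 x y u] = 0 <-> u ^+ 2 = 0)
  /\ (forall z : C, degenerate (F z 1) <->
        [\/ S (m - 1) z = 0, S (3 * m) z = 0,
            S m z - S (m - 1) z = 0 | S m z + S (m - 1) z = 0])
  /\ (forall z : C, S (m - 1) z = 0 ->
        forall x y u : C, (F z 1).@[pt3 x y u] = 0 <-> u ^+ 2 = 0)
  /\ (forall z : C, S (3 * m) z = 0 ->
        forall x y u : C, (F z 1).@[pt3 x y u] = 0 <->
          (x * S m z - y * S (m - 1) z) * (y * S m z - x * S (m - 1) z) = 0)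
  /\ (forall z : C, S m z - S (m - 1) z = 0 ->
        forall x y u : C, (F z 1).@[pt3 x y u] = 0 <->
          (x - y) ^+ 2 - (2 - z) * u ^+ 2 = 0)
  /\ (forall z : C, S m z + S (m - 1) z = 0 ->
        forall x y u : C, (F z 1).@[pt3 x y u] = 0 <->
          (x + y) ^+ 2 - (2 + z) * u ^+ 2 = 0).
Proof.
move=> F S; rewrite /F /S /= {F S}.
split.
  have [c [c0 ->]] := @Fpol_10 C m hm.
  split; first by apply/degenerate_nf; constructor 2; ring.
  move=> x y u; rewrite nf_eval.
  have -> : x * y * 0 + (x ^+ 2 + y ^+ 2) * 0 + u ^+ 2 * c = c * u ^+ 2 by ring.
  exact: iff_mul.
have key : forall z : C, let s := cheb m z in let t := cheb (m - 1) z in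
  [/\ s ^+ 2 - z * s * t + t ^+ 2 = 1,
      (- z + (4 - z ^+ 2) * s * t) * t - s = - cheb (3 * m) z,
      2 * (- s * t * t) - (1 + z * s * t) * t = - t * (s + t) ^+ 2 &
      2 * (- s * t * t) + (1 + z * s * t) * t = t * (s - t) ^+ 2].
  move=> z s t.
  have hc : s ^+ 2 - z * s * t + t ^+ 2 = 1 by apply: cassini.
  split => //.
  - apply/eqP; rewrite -subr_eq0 opprK cheb3 -/s -/t; apply/eqP.
    have -> : (- z + (4 - z ^+ 2) * s * t) * t - s +
      (s ^+ 3 - 3 * s * t ^+ 2 + z * t ^+ 3) =
      (s + z * t) * ((s ^+ 2 - z * s * t + t ^+ 2) - 1) by ring.
    by rewrite hc subrr mulr0.
  - have -> : 2 * (- s * t * t) - (1 + z * s * t) * t =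
      - t * (s + t) ^+ 2 + t * ((s ^+ 2 - z * s * t + t ^+ 2) - 1) by ring.
    by rewrite hc subrr mulr0 addr0.
  - have -> : 2 * (- s * t * t) + (1 + z * s * t) * t =
      t * (s - t) ^+ 2 - t * ((s ^+ 2 - z * s * t + t ^+ 2) - 1) by ring.
    by rewrite hc subrr mulr0 subr0.
split.
  move=> z; rewrite Fpol_z1 // degenerate_nf.
  have [hc hC hm1 hp1] := key z.
  move: hc hC hm1 hp1; set s := cheb m z; set t := cheb (m - 1) z => hc hC hm1 hp1.
  rewrite hC hm1 hp1.
  have sq : forall a : C, a ^+ 2 = 0 <-> a = 0.
    by move=> a; split => [/eqP|->]; [rewrite sqrf_eq0 => /eqP|rewrite expr0n].
  split.
  - case=> [/eqP|/eqP|/eqP].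
    + by rewrite oppr_eq0 => /eqP h; constructor 2.
    + rewrite mulf_eq0 oppr_eq0 => /orP [/eqP ->|/eqP /sq h]; first by constructor 1.
      by constructor 4.
    + rewrite mulf_eq0 => /orP [/eqP ->|/eqP /sq h]; first by constructor 1.
      by constructor 3.
  - case=> [->|->|->|->].
    + by constructor 2; rewrite oppr0 mul0r.
    + by constructor 1; rewrite oppr0.
    + by constructor 3; rewrite expr0n mulr0.
    + by constructor 2; rewrite expr0n mulr0.
split.
  move=> z ht x y u; rewrite Fpol_z1 // nf_eval.
  have [hc _ _ _] := key z.
  move: hc ht; set s := cheb m z; set t := cheb (m - 1) z => hc ht.
  rewrite ht in hc *.
  have s0 : s != 0.
    apply/eqP => s0; have : (1:C) = 0 by (rewrite -hc s0; ring).
    by move/eqP; rewrite oner_eq0.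
  have -> : x * y * ((1 + z * s * 0) * 0) + (x ^+ 2 + y ^+ 2) * (- s * 0 * 0) +
    u ^+ 2 * ((- z + (4 - z ^+ 2) * s * 0) * 0 - s) = (- s) * u ^+ 2 by ring.
  by apply: iff_mul; rewrite oppr_eq0.
split.
  move=> z h3 x y u; rewrite Fpol_z1 // nf_eval.
  have [hc hC _ _] := key z.
  move: hc hC; set s := cheb m z; set t := cheb (m - 1) z => hc hC.
  rewrite h3 oppr0 in hC.
  have t0 : t != 0.
    apply/eqP => t0; have s0 : s = 0 by (apply/eqP; rewrite -oppr_eq0; apply/eqP; rewrite -hC t0; ring).
    have : (1:C) = 0 by (rewrite -hc s0 t0; ring).
    by move/eqP; rewrite oner_eq0.
  have -> : x * y * ((1 + z * s * t) * t) + (x ^+ 2 + y ^+ 2) * (- s * t * t) +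
    u ^+ 2 * ((- z + (4 - z ^+ 2) * s * t) * t - s) =
    t * ((x * s - y * t) * (y * s - x * t)) + x * y * t * (1 - (s ^+ 2 - z * s * t + t ^+ 2))
    + u ^+ 2 * ((- z + (4 - z ^+ 2) * s * t) * t - s) by ring.
  rewrite hc hC subrr !mulr0 !addr0.
  exact: iff_mul.
split.
  move=> z hd x y u; rewrite Fpol_z1 // nf_eval.
  have [hc _ _ _] := key z.
  move: hc hd; set s := cheb m z; set t := cheb (m - 1) z => hc /eq0P hd.
  rewrite -hd in hc *.
  have s0 : s != 0.
    apply/eqP => s0; have : (1:C) = 0 by (rewrite -hc s0; ring).
    by move/eqP; rewrite oner_eq0.
  have -> : x * y * ((1 + z * s * s) * s) + (x ^+ 2 + y ^+ 2) * (- s * s * s) +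
    u ^+ 2 * ((- z + (4 - z ^+ 2) * s * s) * s - s) =
    (- s ^+ 3) * ((x - y) ^+ 2 - (2 - z) * u ^+ 2)
    + (1 - (s ^+ 2 - z * s * s + s ^+ 2)) * (x * y * s - u ^+ 2 * (1 + z) * s) by ring.
  rewrite hc subrr mul0r addr0.
  by apply: iff_mul; rewrite oppr_eq0 expf_neq0.
move=> z hd x y u; rewrite Fpol_z1 // nf_eval.
have [hc _ _ _] := key z.
move: hc hd; set s := cheb m z; set t := cheb (m - 1) z => hc.
move=> hd0; have hd : t = - s by apply/eqP; rewrite -addr_eq0 addrC; apply/eqP.
rewrite hd in hc *.
have s0 : s != 0.
    apply/eqP => s0; have : (1:C) = 0 by (rewrite -hc s0; ring).
    by move/eqP; rewrite oner_eq0.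
have -> : x * y * ((1 + z * s * - s) * - s) + (x ^+ 2 + y ^+ 2) * (- s * - s * - s) +
  u ^+ 2 * ((- z + (4 - z ^+ 2) * s * - s) * - s - s) =
  (- s ^+ 3) * ((x + y) ^+ 2 - (2 + z) * u ^+ 2)
  + (1 - (s ^+ 2 - z * s * - s + (- s) ^+ 2)) * (- (x * y * s) - u ^+ 2 * (1 - z) * s) by ring.
rewrite hc subrr mul0r addr0.
by apply: iff_mul; rewrite oppr_eq0 expf_neq0.
Qed.
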